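(* Let $T>0$, $I=[0,T]$. Let $\Phi:\mathbb{R}\to\mathbb{R}$ be a strictly increasing homeomorphism; $a\in C(I\times\mathbb{R},\mathbb{R})$ with $a(t,x)\ge h(t)$ for all $(t,x)$, where $h\in C(I,\mathbb{R})$, $h\ge0$, $1/h\in L^p(I)$ for some $p>1$; $f:I\times\mathbb{R}^2\to\mathbb{R}$ Carathéodory. Let $\alpha,\beta\in W^{1,p}(I)$ be respectively a lower and an upper solution of $(\Phi(a(t,x(t))x'(t)))'=f(t,x(t),x'(t))$ with $\alpha\le\beta$ on $I$, and assume $a(0,x)\ne0$ and $a(T,x)\ne0$ for every $x\in\mathbb{R}$. Then: (i) if $\alpha(0)=\beta(0)$, then $\mathcal{A}_\alpha(0)\le\mathcal{A}_\beta(0)$; (ii) if $\alpha(T)=\beta(T)$, then $\mathcal{A}_\alpha(T)\ge\mathcal{A}_\beta(T)$.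
   Context: A continuous $\alpha$ is a lower [upper] solution if $\alpha\in W^{1,1}(I)$, $t\mapsto\Phi(a(t,\alpha(t))\alpha'(t))\in W^{1,1}(I)$ and its derivative is $\ge f(t,\alpha(t),\alpha'(t))$ [$\le$] for a.e. $t$. $\mathcal{A}_\alpha$ denotes the unique continuous function on $I$ equal to $a(t,\alpha(t))\alpha'(t)$ a.e. Carathéodory: measurable in $t$, continuous in $(x,y)$ for a.e. $t$. *)

(* Defs.v *)
From HB Require Import structures.
From mathcomp Require Import all_boot all_order all_algebra.
From mathcomp Require Import all_classical all_reals all_analysis.
Set Implicit Arguments. Unset Strict Implicit. Unset Printing Implicit Defensive.
Import Order.TTheory GRing.Theory Num.Theory.
Import numFieldNormedType.Exports.
Local Open Scope classical_set_scope.
Local Open Scope ring_scope.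

Section Defs.
Variable R : realType.
Local Notation mu := (@lebesgue_measure R).

Definition Iset (T : R) : set R := [set` `[0, T]].

Definition ae_on (T : R) (P : R -> Prop) : Prop :=
  {ae mu, forall t, Iset T t -> P t}.

Definition Lp (T p : R) (g : R -> R) : Prop :=
  measurable_fun (Iset T) g /\
  (\int[mu]_(t in Iset T) ((`|g t| `^ p)%:E) < +oo)%E.

(* u in W^{1,1}(I): u' (the a.e. derivative of u) is in L^1(I) and
   u(t) = u(0) + int_0^t u' for all t in I (absolute continuity). *)
Definition W11 (T : R) (u : R -> R) : Prop :=
  mu.-integrable (Iset T) (EFin \o derive1 u) /\
  forall t, Iset T t -> u t = u 0 + \int[mu]_(s in [set` `[0, t]]) derive1 u s.

Definition W1p (T p : R) (u : R -> R) : Prop :=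
  W11 T u /\ Lp T p (derive1 u).

(* t |-> Phi(a(t,u(t)) u'(t)) belongs to W^{1,1}(I): there is a W^{1,1}
   function w equal to it a.e. in I; w is then its (AC) representative. *)
Definition flux_rep (T : R) (Phi : R -> R) (a : R -> R -> R) (u w : R -> R) :=
  W11 T w /\ ae_on T (fun t => w t = Phi (a t (u t) * derive1 u t)).

Definition lower_sol (T : R) (Phi : R -> R) (a : R -> R -> R)
  (f : R -> R -> R -> R) (u : R -> R) : Prop :=
  {within Iset T, continuous u} /\ W11 T u /\
  exists w, flux_rep T Phi a u w /\
    ae_on T (fun t => f t (u t) (derive1 u t) <= derive1 w t).

Definition upper_sol (T : R) (Phi : R -> R) (a : R -> R -> R)
  (f : R -> R -> R -> R) (u : R -> R) : Prop :=
  {within Iset T, continuous u} /\ W11 T u /\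
  exists w, flux_rep T Phi a u w /\
    ae_on T (fun t => derive1 w t <= f t (u t) (derive1 u t)).

(* A is (the) continuous function on I equal a.e. to a(t,u(t)) u'(t),
   i.e. A = \mathcal{A}_u *)
Definition is_calA (T : R) (a : R -> R -> R) (u A : R -> R) : Prop :=
  {within Iset T, continuous A} /\
  ae_on T (fun t => A t = a t (u t) * derive1 u t).

Definition Caratheodory (T : R) (f : R -> R -> R -> R) : Prop :=
  (forall x y, measurable_fun (Iset T) (fun t => f t x y)) /\
  ae_on T (fun t => continuous (fun xy : R * R => f t xy.1 xy.2)).

Definition incr_homeo (Phi : R -> R) : Prop :=
  (forall x y, x < y -> Phi x < Phi y) /\ continuous Phi /\
  exists Psi : R -> R, continuous Psi /\ cancel Phi Psi /\ cancel Psi Phi.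

End Defs.

(* Main.v *)
Require Import Defs.
From HB Require Import structures.
From mathcomp Require Import all_boot all_order all_algebra.
From mathcomp Require Import all_classical all_reals all_analysis.
From mathcomp Require Import ring lra.
Import Order.TTheory GRing.Theory Num.Theory.
Import numFieldNormedType.Exports.
Local Open Scope classical_set_scope.
Local Open Scope ring_scope.
Section Aux.
Variable R : realType.
Local Notation mu := (@lebesgue_measure R).

Lemma aeS (P Q : R -> Prop) : (forall x, P x -> Q x) ->
  {ae mu, forall x, P x} -> {ae mu, forall x, Q x}.
Proof. move=> PQ; exact: (@filterS _ _ (ae_filter_ringOfSetsType mu)). Qed.

Lemma Rint_lb (D : set R) (g : R -> R) (k : R) : measurable D ->
  mu.-integrable D (EFin \o g) -> 0 <= k ->
  {ae mu, forall x, D x -> k <= g x} ->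
  (k%:E * mu D <= \int[mu]_(x in D) (g x)%:E)%E.
Proof.
move=> mD ig k0 ae.
have mg := measurable_int _ ig.
rewrite -integral_cst//.
have -> : (\int[mu]_(x in D) (g x)%:E = \int[mu]_(x in D) ((EFin \o g)^\+ x))%E.
  apply: ae_eq_integral => //; first exact: measurable_realfun.measurable_funepos.
  apply: aeS ae => x H Dx; have := H Dx => kg.
  by rewrite funeposE /= max_l// lee_fin (le_trans k0).
apply: ae_ge0_le_integral => //.
- exact: measurable_realfun.measurable_funepos.
- apply: aeS ae => x H Dx; have := H Dx => kg.
  by rewrite funeposE /= max_l// ?lee_fin// (le_trans k0).
Qed.

Lemma int_gap (T : R) (u v : R -> R) (s t k : R) :
  W11 T u -> W11 T v -> 0 <= s -> s <= t -> t <= T -> 0 <= k ->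
  {ae mu, forall x, [set` `]s, t]] x -> k <= derive1 u x - derive1 v x} ->
  k * (t - s) <= (u t - v t) - (u s - v s).
Proof.
move=> [iu Hu] [iv Hv] s0 st tT k0 ae.
have sT : s <= T by apply: le_trans tT.
have t0 : 0 <= t by apply: le_trans st.
have It : [set` `[0, t]] `<=` Iset T.
  by apply: subset_itvl; rewrite bnd_simp.
have Ist : [set` `]s, t]] `<=` Iset T.
  apply: subset_trans It; apply: subset_itvr; rewrite bnd_simp//.
have key (w : R -> R) : mu.-integrable (Iset T) (EFin \o derive1 w) ->
    (forall x, Iset T x -> w x = w 0 + \int[mu]_(y in [set` `[0, x]]) derive1 w y) ->
    w t - w s = \int[mu]_(y in [set` `]s, t]]) derive1 w y.
  move=> iw Hw.
  rewrite (Hw t) ?(Hw s); last 2 first.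
  - by rewrite /Iset /= in_itv /= s0.
  - by rewrite /Iset /= in_itv /= t0.
  rewrite opprD addrACA subrr add0r.
  apply: (@Rintegral_itvB R (derive1 w) (BLeft 0) (BRight t) s).
  - apply: integrableS iw => //. rewrite /Iset; exact: measurable_itv.
  - exact: s0.
  - exact: st.
have -> : u t - v t - (u s - v s) = (u t - u s) - (v t - v s).
  by ring.
rewrite (key u)// (key v)// -RintegralB//; last 2 first.
- by apply: integrableS iu => //; rewrite /Iset; exact: measurable_itv.
- by apply: integrableS iv => //; rewrite /Iset; exact: measurable_itv.
have iw : mu.-integrable [set` `]s, t]] (EFin \o (fun x => derive1 u x - derive1 v x)).
  rewrite (_ : EFin \o _ = fun x => ((EFin \o derive1 u) x - (EFin \o derive1 v) x)%E); last first.
    by apply/funext => x /=; rewrite EFinB.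
  apply: integrableB => //.
  - by apply: integrableS iu => //; rewrite /Iset; exact: measurable_itv.
  - by apply: integrableS iv => //; rewrite /Iset; exact: measurable_itv.
have := @Rint_lb _ _ _ (measurable_itv _) iw k0 ae.
rewrite lebesgue_measure_itv /= lte_fin.
have [lt_st|ge_st] := ltP s t; last first.
  have -> : t = s by apply/eqP; rewrite eq_le st ge_st.
  rewrite subrr mulr0 => _; apply: Rintegral_ge0 => x /=; rewrite in_itv /=.
  by move=> /andP[sx xs]; have := lt_le_trans sx xs; rewrite ltxx.
rewrite -EFinD => h.
rewrite -lee_fin /Rintegral fineK ?EFinM//.
exact: integrable_fin_num.
Qed.

End Aux.
Section Aux2.
Variable R : realType.

Lemma near_gap (T : R) (a : R -> R -> R) (u v Au Av : R -> R) (t0 : R) :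
  Iset T t0 ->
  {within [set tx : R * R | Iset T tx.1], continuous (fun tx => a tx.1 tx.2)} ->
  {within Iset T, continuous u} -> {within Iset T, continuous v} ->
  {within Iset T, continuous Au} -> {within Iset T, continuous Av} ->
  u t0 = v t0 -> 0 < a t0 (u t0) -> Av t0 < Au t0 ->
  exists2 k, 0 < k & exists2 e, 0 < e & forall t, Iset T t -> `|t0 - t| < e ->
     [/\ a t (u t) != 0, a t (v t) != 0 &
         k <= Au t / a t (u t) - Av t / a t (v t)].
Proof.
move=> It0 Ha Hu Hv HAu HAv uv a0 Avu.
set F := within (Iset T) (nbhs t0).
have cA (w : R -> R) : {within Iset T, continuous w} -> w @ F --> w t0.
  by move=> Hw; exact: ((subspace_continuousP _ _).1 Hw t0 It0).
have FI : F (Iset T) by exact: withinT.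
have ca (w : R -> R) : {within Iset T, continuous w} ->
    (fun t => a t (w t)) @ F --> a t0 (w t0).
  move=> Hw Q HQ.
  have := (subspace_continuousP _ _).1 Ha (t0, w t0) It0 _ HQ.
  rewrite /= /within => HW.
  have hp : (fun t => (t, w t)) @ F --> (t0, w t0).
    have h1 : (fun t => t) @ F --> t0 by exact: cvg_within.
    exact: (cvg_pair h1 (cA w Hw)).
  have := hp _ HW.
  by apply: filterS2 FI => t Ht /= /(_ Ht).
have a0' : a t0 (v t0) = a t0 (u t0) by rewrite uv.
have gu : (fun t => Au t / a t (u t)) @ F --> Au t0 / a t0 (u t0).
  apply: cvgM; first exact: cA.
  exact: (cvgV (lt0r_neq0 a0) (ca u Hu)).
have gv : (fun t => Av t / a t (v t)) @ F --> Av t0 / a t0 (u t0).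
  apply: cvgM; first exact: cA.
  rewrite -a0'; apply: cvgV; first by rewrite a0' lt0r_neq0.
  exact: ca.
set a00 := a t0 (u t0) in a0 a0' gu gv *.
pose k := (Au t0 - Av t0) / a00 / 2.
have k0 : 0 < k by rewrite /k divr_gt0// divr_gt0// subr_gt0.
have hk : Au t0 / a00 - Av t0 / a00 = 2 * k.
  by rewrite /k; field; rewrite lt0r_neq0.
have k2 : 0 < k / 2 by rewrite divr_gt0.
have h1 := cvgr_dist_lt _ _ gu _ k2.
have h2 := cvgr_dist_lt _ _ gv _ k2.
have h3 := cvgr_dist_lt _ _ (ca u Hu) _ a0.
have h4 := cvgr_dist_lt _ _ (ca v Hv) _ a0.
rewrite a0' in h4.
have HP : \forall t \near F, [/\ a t (u t) != 0, a t (v t) != 0 &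
         k <= Au t / a t (u t) - Av t / a t (v t)].
  near=> t.
  have H1 : `|Au t0 / a00 - Au t / a t (u t)| < k / 2 by near: t; exact: h1.
  have H2 : `|Av t0 / a00 - Av t / a t (v t)| < k / 2 by near: t; exact: h2.
  have H3 : `|a00 - a t (u t)| < a00 by near: t; exact: h3.
  have H4 : `|a00 - a t (v t)| < a00 by near: t; exact: h4.
  move: H1 H2 H3 H4; rewrite !ltr_norml => /andP[H1 H1'] /andP[H2 H2'] /andP[H3 H3'] /andP[H4 H4'].
  split.
  - rewrite gt_eqF//; lra.
  - rewrite gt_eqF//; lra.
  - lra.
move: HP; rewrite near_withinE => /nbhs_ballP[e /= e0 He].
exists k => //; exists e => // t It hte.
by apply: He => //; rewrite -ball_normE.
Unshelve. all: by end_near.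
Qed.
End Aux2.
Lemma aeS2 (R : realType) (P Q S : R -> Prop) :
  (forall x, P x -> Q x -> S x) ->
  {ae (@lebesgue_measure R), forall x, P x} ->
  {ae (@lebesgue_measure R), forall x, Q x} ->
  {ae (@lebesgue_measure R), forall x, S x}.
Proof.
move=> PQ; exact: (@filterS2 _ _ (ae_filter_ringOfSetsType (@lebesgue_measure R))).
Qed.

Lemma Iset_in (R : realType) (T x : R) : Iset T x <-> 0 <= x <= T.
Proof. by rewrite /Iset /= in_itv. Qed.

Theorem lemma4p3 (R : realType) (T p : R) (Phi : R -> R) (a : R -> R -> R)
  (h : R -> R) (f : R -> R -> R -> R) (alpha beta : R -> R) :
  0 < T -> 1 < p ->
  incr_homeo Phi ->
  {within [set tx : R * R | Iset T tx.1], continuous (fun tx => a tx.1 tx.2)} ->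
  {within Iset T, continuous h} ->
  (forall t, Iset T t -> 0 <= h t) ->
  (forall t x, Iset T t -> h t <= a t x) ->
  ae_on T (fun t => 0 < h t) -> Lp T p (fun t => (h t)^-1) ->
  Caratheodory T f ->
  W1p T p alpha -> W1p T p beta ->
  lower_sol T Phi a f alpha -> upper_sol T Phi a f beta ->
  (forall t, Iset T t -> alpha t <= beta t) ->
  (forall x, a 0 x != 0) -> (forall x, a T x != 0) ->
  (alpha 0 = beta 0 ->
     forall Aa Ab, is_calA T a alpha Aa -> is_calA T a beta Ab -> Aa 0 <= Ab 0) /\
  (alpha T = beta T ->
     forall Aa Ab, is_calA T a alpha Aa -> is_calA T a beta Ab -> Ab T <= Aa T).
Proof.
move=> T0 _ _ Ha _ h0 ha _ _ _ [Wa _] [Wb _] [ca _] [cb _] ab a0ne aTne.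
have I0 : Iset T 0 by apply/Iset_in; rewrite lexx ltW.
have IT : Iset T T by apply/Iset_in; rewrite lexx ltW.
have apos t x : Iset T t -> a t x != 0 -> 0 < a t x.
  move=> It ne; rewrite lt_neqAle eq_sym ne /=.
  exact: le_trans (h0 _ It) (ha _ _ It).
have deriv (u A : R -> R) x : a x (u x) != 0 -> A x = a x (u x) * derive1 u x ->
    derive1 u x = A x / a x (u x).
  by move=> ne ->; rewrite [a _ _ * _]mulrC mulfK.
split.
- move=> e0 Aa Ab [cAa aeA] [cAb aeB]; rewrite leNgt; apply/negP => lt.
  have [k k0 [e ep H]] := near_gap _ _ _ _ _ _ _ _ I0 Ha ca cb cAa cAb e0 (apos _ _ I0 (a0ne _)) lt.
  pose t := Num.min (e / 2) T.
  have t0 : 0 < t by rewrite /t lt_min T0 andbT divr_gt0.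
  have tT : t <= T by rewrite /t ge_min lexx orbT.
  have te : t < e.
    have : t <= e / 2 by rewrite /t ge_min lexx.
    lra.
  have AE : {ae (@lebesgue_measure R), forall x, [set` `]0, t]] x ->
              k <= derive1 alpha x - derive1 beta x}.
    apply: aeS2 aeA aeB => x HA HB /=; rewrite in_itv /= => /andP[x0 xt].
    have Ix : Iset T x by apply/Iset_in; rewrite ltW //= (le_trans xt).
    have hx : `|0 - x| < e by rewrite sub0r normrN gtr0_norm// (le_lt_trans xt).
    have [na nb gap] := H x Ix hx.
    by rewrite (deriv _ _ _ na (HA Ix)) (deriv _ _ _ nb (HB Ix)).
  have := int_gap _ _ _ _ _ _ _ Wa Wb (lexx 0) (ltW t0) tT (ltW k0) AE.
  rewrite e0 subrr subr0.
  have It : Iset T t by apply/Iset_in; rewrite ltW.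
  have := ab t It.
  have := mulr_gt0 k0 t0; lra.
- move=> eT Aa Ab [cAa aeA] [cAb aeB]; rewrite leNgt; apply/negP => lt.
  have [k k0 [e ep H]] := near_gap _ _ _ _ _ _ _ _ IT Ha cb ca cAb cAa (esym eT)
     (apos _ _ IT (aTne _)) lt.
  pose s := Num.max (T - e / 2) 0.
  have s0 : 0 <= s by rewrite /s le_max lexx orbT.
  have sT : s < T.
    rewrite /s gt_max T0 andbT; lra.
  have se : T - s < e.
    have : T - e / 2 <= s by rewrite /s le_max lexx.
    lra.
  have AE : {ae (@lebesgue_measure R), forall x, [set` `]s, T]] x ->
              k <= derive1 beta x - derive1 alpha x}.
    apply: aeS2 aeA aeB => x HA HB /=; rewrite in_itv /= => /andP[sx xT].
    have Ix : Iset T x by apply/Iset_in; rewrite xT andbT (le_trans s0) ?ltW.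
    have hx : `|T - x| < e by rewrite ger0_norm ?subr_ge0//; lra.
    have [na nb gap] := H x Ix hx.
    by rewrite (deriv _ _ _ na (HB Ix)) (deriv _ _ _ nb (HA Ix)).
  have := int_gap _ _ _ _ _ _ _ Wb Wa s0 (ltW sT) (lexx T) (ltW k0) AE.
  rewrite eT subrr sub0r.
  have Is : Iset T s by apply/Iset_in; rewrite s0 ltW.
  have := ab s Is.
  have Ts : 0 < T - s by rewrite subr_gt0.
  have := mulr_gt0 k0 Ts.
  lra.
Qed.
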